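(* Let $\mathcal R_1\subset\mathcal G$ be finite and let $\mathcal R_2\subset\mathcal G$ have Property 2. Then there exists a finite set $\mathcal R_3\subset\mathcal G$ such that $\mathcal R_1\subset\mathcal R_3\mathcal R_2$ and the seminorms $p_{\mathcal R_3\mathcal R_2}$ and $q_{\mathcal R_3,\mathcal R_2}$ on $(\mathbb R^d)^{\mathcal R_3\mathcal R_2}$ are equivalent.
   Context: Euclidean group: $\mathrm E(n)$ consists of pairs $(A|b)$, $A\in\mathrm O(n)$, $b\in\mathbb R^n$, acting by $(A|b)\cdot x=Ax+b$, product $(A_1|b_1)(A_2|b_2)=(A_1A_2|b_1+A_1b_2)$; $\mathrm{rot}(A|b)=A$. Standing setting: $d=d_1+d_2$; $\mathcal S<\mathrm E(d_2)$ is a space group (discrete subgroup containing $d_2$ translations with linearly independent translation vectors); for $A\in\mathrm O(d_1)$, $(B|b)\in\mathrm E(d_2)$, $A\oplus(B|b)=(\mathrm{diag}(A,B)|(0,b))$. $\mathcal G$ is a discrete subgroup of $\mathrm E(d)$ (all orbits discrete) contained in $\{A\oplus s:A\in\mathrm O(d_1),s\in\mathcal S\}$ with $\{s: A\oplus s\in\mathcal G\}=\mathcal S$. $x_0\in\mathbb R^d$ is such that $g\mapsto g\cdot x_0$ is injective on $\mathcal G$; with $d_{\mathrm{aff}}$ the dimension of the affine hull $\mathrm{aff}(\mathcal G\cdot x_0)$, it is assumed that $\mathcal G\cdot x_0\subset\{0_{d-d_{\mathrm{aff}}}\}\times\mathbb R^{d_{\mathrm{aff}}}$ and $\mathcal G$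 acts trivially on $\mathbb R^{d-d_{\mathrm{aff}}}\times\{0_{d_{\mathrm{aff}}}\}$. For $\mathcal R\subset\mathcal G$: $U_{\mathrm{iso}}(\mathcal R)$ is the set of $u:\mathcal R\to\mathbb R^d$ for which there are $a\in\mathbb R^d$ and $S\in\mathrm{Skew}(d)$ with $\mathrm{rot}(g)u(g)=a+S(g\cdot x_0-x_0)$ for all $g\in\mathcal R$. For finite $\mathcal R$, $(\mathbb R^d)^{\mathcal R}$ has the Euclidean norm $\|v\|=(\sum_{h\in\mathcal R}|v(h)|^2)^{1/2}$ and $p_{\mathcal R}(v)=\mathrm{dist}(v,U_{\mathrm{iso}}(\mathcal R))$. For finite $\mathcal R_1,\mathcal R_2$ and $v:\mathcal R_1\mathcal R_2\to\mathbb R^d$ (where $\mathcal R_1\mathcal R_2=\{gh:g\in\mathcal R_1,h\in\mathcal R_2\}$), $q_{\mathcal R_1,\mathcal R_2}(v)=\big(\sum_{g\in\mathcal R_1}p_{\mathcal R_2}(v(g\,\cdot)|_{\mathcal R_2})^2\big)^{1/2}$. Property 1: $\mathcal R\subset\mathcal G$ is finite, $\mathrm{id}\in\mathcal R$, and $\mathrm{aff}(\mathcal R\cdot x_0)=\mathrm{aff}(\mathcal G\cdot x_0)$. Property 2: $\mathcal R$ is finite and there are $\mathcal R',\mathcal R''\subset\mathcal G$ with $\mathrm{id}\in\mathcal R'$, $\mathcal R'$ generating $\mathcal G$, $\mathcal R''$ having Property 1, and $\mathcal R'\mathcal R''\subset\mathcal R$. *)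

(* Defs.v *)
From HB Require Import structures.
From mathcomp Require Import all_boot all_order all_algebra.
From mathcomp Require Import finmap.
From mathcomp Require Import boolp classical_sets cardinality reals.

Set Implicit Arguments.
Unset Strict Implicit.
Unset Printing Implicit Defensive.

Import Order.TTheory GRing.Theory Num.Theory.
Local Open Scope ring_scope.
Local Open Scope classical_set_scope.

Section Euclid.
Variable R : realType.

(* elements of E(n) : pairs (A | b) ; membership in E(n) is [isE] *)
Definition Eel (n : nat) := ('M[R]_n * 'cV[R]_n)%type.

Definition orthogonal (n : nat) (A : 'M[R]_n) : Prop := A^T *m A = 1%:M.
Definition isE (n : nat) (g : Eel n) : Prop := orthogonal (fst g).

Definition eid (n : nat) : Eel n := (1%:M, 0).
Definition emul (n : nat) (g h : Eel n) : Eel n :=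
  ((fst g) *m (fst h), (snd g) + (fst g) *m (snd h)).
Definition einv (n : nat) (g : Eel n) : Eel n := ((fst g)^T, - ((fst g)^T *m (snd g))).
Definition act (n : nat) (g : Eel n) (x : 'cV[R]_n) : 'cV[R]_n := (fst g) *m x + (snd g).
Definition rot (n : nat) (g : Eel n) : 'M[R]_n := (fst g).

Definition dsum (d1 d2 : nat) (A : 'M[R]_d1) (s : Eel d2) : Eel (d1 + d2) :=
  (block_mx A 0 0 (fst s), col_mx 0 (snd s)).

Definition enorm (n : nat) (x : 'cV[R]_n) : R := Num.sqrt (\sum_i x i 0 ^+ 2).

Definition discrete_set (n : nat) (X : set 'cV[R]_n) : Prop :=
  forall x, X x -> exists2 eps : R, 0 < eps &
    forall y, X y -> enorm (y - x) < eps -> y = x.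

Definition orbit (n : nat) (H : set (Eel n)) (x : 'cV[R]_n) : set 'cV[R]_n :=
  [set act g x | g in H].

Definition is_subgroup (n : nat) (H : set (Eel n)) : Prop :=
  [/\ H `<=` @isE n, H (eid n),
      (forall g h, H g -> H h -> H (emul g h)) &
      (forall g, H g -> H (einv g))].

Definition discrete_subgroup (n : nat) (H : set (Eel n)) : Prop :=
  is_subgroup H /\ forall x, discrete_set (orbit H x).

Definition space_group (n : nat) (S : set (Eel n)) : Prop :=
  discrete_subgroup S /\
  exists t : 'I_n -> 'cV[R]_n,
    (forall i, S (1%:M, t i)) /\ row_free (\matrix_(i < n) (t i)^T).

Definition generates (n : nat) (Rg G : set (Eel n)) : Prop :=
  Rg `<=` G /\ forall H, is_subgroup H -> Rg `<=` H -> G `<=` H.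

Definition aff (n : nat) (X : set 'cV[R]_n) : set 'cV[R]_n :=
  [set x | exists k (l : 'I_k -> R) (p : 'I_k -> 'cV[R]_n),
     [/\ forall i, X (p i), \sum_i l i = 1 & x = \sum_i l i *: p i]].

Definition indep_in (n : nat) (V : set 'cV[R]_n) (k : nat) : Prop :=
  exists f : 'I_k -> 'cV[R]_n,
    (forall i, V (f i)) /\ row_free (\matrix_(i < k) (f i)^T).
Definition diffs (n : nat) (X : set 'cV[R]_n) : set 'cV[R]_n :=
  [set x - y | x in X & y in X].
Definition aff_dim (n : nat) (X : set 'cV[R]_n) (k : nat) : Prop :=
  X !=set0 /\ indep_in (diffs X) k /\ ~ indep_in (diffs X) k.+1.

Definition skew (n : nat) (S : 'M[R]_n) : Prop := S^T = - S.

Definition Uiso (n : nat) (x0 : 'cV[R]_n) (Rs : {fset Eel n})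
    (u : Eel n -> 'cV[R]_n) : Prop :=
  exists (a : 'cV[R]_n) (S : 'M[R]_n), skew S /\
    forall g, g \in Rs -> rot g *m u g = a + S *m (act g x0 - x0).

Definition fnorm (n : nat) (Rs : {fset Eel n}) (v : Eel n -> 'cV[R]_n) : R :=
  Num.sqrt (\sum_(h <- Rs) \sum_i (v h) i 0 ^+ 2).

Definition pR (n : nat) (x0 : 'cV[R]_n) (Rs : {fset Eel n})
    (v : Eel n -> 'cV[R]_n) : R :=
  inf [set fnorm Rs (v \- u) | u in Uiso x0 Rs].

Definition Rprod (n : nat) (R1 R2 : {fset Eel n}) : {fset Eel n} :=
  [fset emul g h | g in R1, h in R2]%fset.

Definition qR (n : nat) (x0 : 'cV[R]_n) (R1 R2 : {fset Eel n})
    (v : Eel n -> 'cV[R]_n) : R :=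
  Num.sqrt (\sum_(g <- R1) pR x0 R2 (fun h => v (emul g h)) ^+ 2).

Definition seminorms_equiv (n : nat) (p q : (Eel n -> 'cV[R]_n) -> R) : Prop :=
  exists c C : R, [/\ 0 < c, 0 < C &
    forall v, c * p v <= q v /\ q v <= C * p v].

Definition standing (d1 d2 : nat) (S : set (Eel d2)) (G : set (Eel (d1 + d2)))
    (x0 : 'cV[R]_(d1 + d2)) (daff : nat) : Prop :=
  [/\ space_group S /\ discrete_subgroup G,
      G `<=` [set dsum A s | A in (@orthogonal d1) & s in S],
      [set s | (exists A, G (dsum A s))] = S :> set _,
      (forall g h, G g -> G h -> act g x0 = act h x0 -> g = h) &
      [/\ aff_dim (orbit G x0) daff,
          (forall g (i : 'I_(d1 + d2)), G g -> (i < d1 + d2 - daff)%N -> act g x0 i 0 = 0) &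
          (forall g (y : 'cV[R]_(d1 + d2)), G g -> (forall i : 'I_(d1 + d2), (d1 + d2 - daff <= i)%N -> y i 0 = 0) ->
              rot g *m y = y)]].

Definition property1 (n : nat) (G : set (Eel n)) (x0 : 'cV[R]_n)
    (Rs : set (Eel n)) : Prop :=
  [/\ Rs `<=` G, finite_set Rs, Rs (eid n) &
      aff (orbit Rs x0) = aff (orbit G x0)].

Definition property2 (n : nat) (G : set (Eel n)) (x0 : 'cV[R]_n)
    (Rs : {fset Eel n}) : Prop :=
  [set` Rs] `<=` G /\
  exists R' R'' : set (Eel n),
    [/\ R' `<=` G, R' (eid n), generates R' G, property1 G x0 R'' &
        [set emul g h | g in R' & h in R''] `<=` [set` Rs]].

End Euclid.

(* Main.v *)
Require Import Defs.
From HB Require Import structures.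
From mathcomp Require Import all_boot all_order all_algebra.
From mathcomp Require Import finmap.
From mathcomp Require Import boolp classical_sets cardinality reals.
From mathcomp Require Import ring.
Import Order.TTheory GRing.Theory Num.Theory.
Local Open Scope ring_scope.
Local Open Scope classical_set_scope.
Set Implicit Arguments.
Unset Strict Implicit.
Unset Printing Implicit Defensive.
Section Basic.
Variable R : realType.
Variable n : nat.
Local Notation E := (Eel R n).

Lemma orthC (A : 'M[R]_n) : Defs.orthogonal A -> A *m A^T = 1%:M.
Proof. by move=> h; apply: mulmx1C. Qed.

Lemma emulA (g h k : E) : emul (emul g h) k = emul g (emul h k).
Proof.
case: g h k => [A a] [B b] [C c]; rewrite /emul /=.
by rewrite mulmxA mulmxDr mulmxA addrA.
Qed.

Lemma emul1g (g : E) : emul (eid R n) g = g.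
Proof. by case: g => A a; rewrite /emul /eid /= !mul1mx add0r. Qed.

Lemma emulg1 (g : E) : emul g (eid R n) = g.
Proof. by case: g => A a; rewrite /emul /eid /= mulmx1 mulmx0 addr0. Qed.

Lemma emulVg (g : E) : isE g -> emul (einv g) g = eid R n.
Proof.
case: g => A a; rewrite /isE /orthogonal /emul /einv /eid /= => h.
by rewrite h addNr.
Qed.

Lemma emulgV (g : E) : isE g -> emul g (einv g) = eid R n.
Proof.
case: g => A a; rewrite /isE /orthogonal /emul /einv /eid /= => h.
by rewrite orthC // mulmxN mulmxA orthC // mul1mx subrr.
Qed.

Lemma act_emul (g h : E) x : act (emul g h) x = act g (act h x).
Proof.
case: g h => [A a] [B b]; rewrite /act /emul /=.
by rewrite mulmxDr mulmxA addrA addrAC.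
Qed.

Lemma act_eid x : act (eid R n) x = x.
Proof. by rewrite /act /eid /= mul1mx addr0. Qed.

Lemma emul_inj (g h h' : E) : isE g -> emul g h = emul g h' -> h = h'.
Proof.
move=> Hg e; have := congr1 (emul (einv g)) e.
by rewrite -!emulA emulVg // !emul1g.
Qed.

End Basic.
Section Norms.
Variable R : realType.
Variable n : nat.

Definition n1 (x : 'cV[R]_n) : R := \sum_i `|x i 0|.

Lemma n1_ge0 (x : 'cV[R]_n) : 0 <= n1 x.
Proof. by apply: sumr_ge0 => i _. Qed.

Lemma n1D x y : n1 (x + y) <= n1 (x : 'cV[R]_n) + n1 y.
Proof.
rewrite /n1 -big_split /=; apply: ler_sum => i _; rewrite mxE; exact: ler_normD.
Qed.

Lemma n1N (x : 'cV[R]_n) : n1 (- x) = n1 x.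
Proof. by apply: eq_bigr => i _; rewrite mxE normrN. Qed.

Lemma n1B x y : n1 (x - y) <= n1 (x : 'cV[R]_n) + n1 y.
Proof. by rewrite -(n1N y); apply: n1D. Qed.

Lemma n1Z (a : R) (x : 'cV[R]_n) : n1 (a *: x) = `|a| * n1 x.
Proof. by rewrite /n1 mulr_sumr; apply: eq_bigr => i _; rewrite mxE normrM. Qed.

Lemma n1_sum (I : Type) (r : seq I) (F : I -> 'cV[R]_n) :
  n1 (\sum_(j <- r) F j) <= \sum_(j <- r) n1 (F j).
Proof.
rewrite /n1 exchange_big /=; apply: ler_sum => i _.
by rewrite summxE; apply: ler_norm_sum.
Qed.

Lemma sq_enorm (x : 'cV[R]_n) : enorm x ^+ 2 = \sum_i (x : 'cV[R]_n) i 0 ^+ 2.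
Proof. by rewrite /enorm sqr_sqrtr //; apply: sumr_ge0 => i _; apply: sqr_ge0. Qed.

Lemma enorm_ge0 (x : 'cV[R]_n) : 0 <= enorm x.
Proof. exact: sqrtr_ge0. Qed.

Lemma sum_sq_le (I : Type) (r : seq I) (F : I -> R) :
  (forall i, 0 <= F i) -> \sum_(i <- r) F i ^+ 2 <= (\sum_(i <- r) F i) ^+ 2.
Proof.
move=> F0; elim: r => [|a r IH]; first by rewrite !big_nil expr0n.
rewrite !big_cons sqrrD -addrA lerD2l.
have s0 : 0 <= \sum_(i <- r) F i by apply: sumr_ge0.
apply: (le_trans IH); rewrite lerDr; apply: mulrn_wge0; exact: mulr_ge0.
Qed.

Lemma enorm_le_n1 (x : 'cV[R]_n) : enorm (x : 'cV[R]_n) <= n1 x.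
Proof.
rewrite -(ler_pXn2r (n:=2)) // ?nnegrE ?enorm_ge0 ?n1_ge0 // sq_enorm /n1.
have -> : \sum_i x i 0 ^+ 2 = \sum_i `|x i 0| ^+ 2.
  by apply: eq_bigr => i _; rewrite real_normK // num_real.
by apply: sum_sq_le => i.
Qed.

Lemma coord_le_enorm (x : 'cV[R]_n) i : `|x i 0| <= enorm x.
Proof.
rewrite -(ler_pXn2r (n:=2)) // ?nnegrE ?enorm_ge0 // sq_enorm real_normK ?num_real //.
rewrite (bigD1 i) //= lerDl; apply: sumr_ge0 => j _; exact: sqr_ge0.
Qed.

Lemma n1_le_enorm (x : 'cV[R]_n) : n1 (x : 'cV[R]_n) <= n%:R * enorm x.
Proof.
rewrite /n1 (le_trans (ler_sum _ (fun i _ => coord_le_enorm x i))) //.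
by rewrite sumr_const card_ord mulr_natl.
Qed.

Lemma sum_sq_mx (x : 'cV[R]_n) : \sum_i (x : 'cV[R]_n) i 0 ^+ 2 = (x^T *m x) 0 0.
Proof. by rewrite mxE; apply: eq_bigr => i _; rewrite mxE expr2. Qed.

Lemma enorm_orth (A : 'M[R]_n) (x : 'cV[R]_n) : A^T *m A = 1%:M -> enorm (A *m x) = enorm x.
Proof.
move=> h; rewrite /enorm !sum_sq_mx trmx_mul mulmxA -(mulmxA _ _ A) h mulmx1 //.
Qed.

Lemma orth_mul (A B : 'M[R]_n) : A^T *m A = 1%:M -> B^T *m B = 1%:M ->
  (A *m B)^T *m (A *m B) = 1%:M.
Proof.
by move=> hA hB; rewrite trmx_mul mulmxA -(mulmxA _ _ A) hA mulmx1 hB.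
Qed.

End Norms.
Section Span.
Variable R : realType.
Variable n : nat.
Local Notation E := (Eel R n).

Lemma fin_unif (T : eqType) (s : seq T) (P : T -> R -> Prop) :
  (forall y C C', 0 <= C -> C <= C' -> P y C -> P y C') ->
  (forall y, y \in s -> exists2 C, 0 <= C & P y C) ->
  exists2 C, 0 <= C & forall y, y \in s -> P y C.
Proof.
move=> mono; elim: s => [|a s IH] H; first by exists 0.
have [C1 C10 HC1] := H a (mem_head _ _).
have [C2 C20 HC2] : exists2 C, 0 <= C & forall y, y \in s -> P y C.
  by apply: IH => y ys; apply: H; rewrite in_cons ys orbT.
exists (C1 + C2); first exact: addr_ge0.
move=> y; rewrite in_cons => /orP [/eqP -> | ys].
  by apply: (mono a C1) => //; rewrite lerDl.
by apply: (mono y C2) => //; [rewrite lerDr | apply: HC2].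
Qed.

Lemma aff_comb k (l : 'I_k -> R) (p : 'I_k -> 'cV[R]_n) (L : 'M[R]_n) c :
  \sum_i l i = 1 -> L *m (\sum_i l i *: p i) + c = \sum_i l i *: (L *m p i + c).
Proof.
move=> hl; rewrite mulmx_sumr; under [RHS]eq_bigr do rewrite scalerDr.
rewrite big_split /= -scaler_suml hl scale1r; congr (_ + _).
by apply: eq_bigr => i _; rewrite scalemxAr.
Qed.

Variables (G R2 : set E) (x0 : 'cV[R]_n).
Hypothesis HG : is_subgroup G.
Hypothesis Haff : aff (Defs.orbit R2 x0) = aff (Defs.orbit G x0).

Lemma act_inv (g : E) y : isE g -> act g (act (einv g) y) = y.
Proof. by move=> h; rewrite -act_emul emulgV // act_eid. Qed.

Lemma span_pt (g : E) y : G g -> (exists k, G k /\ y = act k x0) ->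
  exists2 K, 0 <= K & forall (L : 'M[R]_n) (c : 'cV[R]_n) (Et : R), 0 <= Et ->
    (forall h, R2 h -> n1 (L *m act g (act h x0) + c) <= Et) ->
    n1 (L *m y + c) <= K * Et.
Proof.
case: HG => GE G1 GM GV Gg [k [Gk ->]].
set z := act (einv g) (act k x0).
have zG : aff (Defs.orbit G x0) z.
  exists 1%N, (fun _ => 1), (fun _ => z); split => //.
  - move=> i; exists (emul (einv g) k); first by apply: GM => //; apply: GV.
    by rewrite act_emul.
  - by rewrite big_ord1.
  - by rewrite big_ord1 scale1r.
rewrite -Haff in zG; case: zG => m [l [p [pin sl zE]]].
exists (\sum_i `|l i|); first by apply: sumr_ge0 => i _.
move=> L c Et Et0 hyp.
have -> : act k x0 = act g z by rewrite /z act_inv //; apply: GE.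
rewrite zE /act.
rewrite mulmxDr mulmxA -addrA.
rewrite aff_comb //.
apply: (le_trans (n1_sum _ _)); rewrite mulr_suml; apply: ler_sum => i _.
rewrite n1Z; apply: ler_wpM2l => //.
case: (pin i) => h Rh hE; have := hyp h Rh; rewrite hE /act.
by rewrite mulmxDr mulmxA addrA.
Qed.

End Span.
Section Chain.
Variable R : realType.
Variable n : nat.
Local Notation E := (Eel R n).
Variables (G R' : set E).
Hypothesis HG : is_subgroup G.

Definition link (x y : E) := exists2 r, R' r & (y = emul x r \/ x = emul y r).

Fixpoint lchain (x : E) (s : seq E) : Prop :=
  if s is y :: s' then [/\ link x y, G y & lchain y s'] else True.

Definition reach2 x y := exists s, lchain x s /\ last x s = y.

Lemma link_sym x y : link x y -> link y x.
Proof. by case=> r Rr [] e; exists r => //; [right|left]. Qed.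

Lemma link_mul g x y : link x y -> link (emul g x) (emul g y).
Proof. by case=> r Rr [] ->; exists r => //; [left|right]; rewrite emulA. Qed.

Lemma lchain_cat x s t : lchain x s -> lchain (last x s) t -> lchain x (s ++ t).
Proof. by elim: s x => [|y s IH] x //= [l Gy c] c2; split => //; apply: IH. Qed.

Lemma reach2_trans x y z : reach2 x y -> reach2 y z -> reach2 x z.
Proof.
move=> [s [cs ls]] [t [ct lt]]; exists (s ++ t); split.
  by apply: lchain_cat => //; rewrite ls.
by rewrite last_cat ls.
Qed.

Lemma reach2_sym_aux x s : lchain x s -> G x -> reach2 (last x s) x.
Proof.
elim: s x => [|y s IH] x /=; first by move=> _ _; exists [::].
move=> [l Gy c] Gx; apply: (reach2_trans (IH _ c Gy)).
by exists [:: x]; split => //=; split => //; apply: link_sym.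
Qed.

Lemma reach2_sym x y : G x -> reach2 x y -> reach2 y x.
Proof. by move=> Gx [s [c <-]]; apply: reach2_sym_aux. Qed.

Lemma reach2_mul g x y : G g -> reach2 x y -> reach2 (emul g x) (emul g y).
Proof.
case: HG => _ _ GM _ Gg [s [c <-]]; exists (map (emul g) s); split; last by rewrite last_map.
elim: s x c => [|z s IH] x //= [l Gz c]; split; [exact: link_mul | exact: GM | exact: IH].
Qed.

Hypothesis HR'G : R' `<=` G.
Hypothesis Hgen : generates R' G.

Lemma reach_all g : G g -> reach2 (eid R n) g.
Proof.
case: Hgen => _ H Gg.
suff HW : is_subgroup (G `&` reach2 (eid R n)).
  have [] // := H _ HW _ _ Gg.
  move=> r Rr; split; first exact: HR'G.
  exists [:: r]; split => //=; split => //; last exact: HR'G.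
  by exists r => //; left; rewrite emul1g.
case: HG => GE G1 GM GV; split.
- by move=> x [Gx _]; apply: GE.
- by split => //; exists [::].
- move=> x y [Gx rx] [Gy ry]; split; first exact: GM.
  apply: (reach2_trans rx); rewrite -{1}(emulg1 x); exact: reach2_mul.
- move=> x [Gx rx]; split; first exact: GV.
  have := reach2_mul (GV _ Gx) (reach2_sym G1 rx).
  by rewrite emulVg ?emulg1 //; apply: GE.
Qed.

End Chain.
Section Bound.
Variable R : realType.
Variable n : nat.
Local Notation E := (Eel R n).

Definition Mapp (m : 'M[R]_n * 'cV[R]_n) (y : 'cV[R]_n) := m.1 *m y + m.2.

Lemma Mapp_sub a b y : Mapp a y - Mapp b y = (a.1 - b.1) *m y + (a.2 - b.2).
Proof. by rewrite /Mapp mulmxBl opprD addrACA. Qed.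

Lemma n1_tri (u v w : 'cV[R]_n) : n1 (u - w) <= n1 (u - v) + n1 (v - w).
Proof. have -> : u - w = (u - v) + (v - w) by rewrite addrA subrK. exact: n1D. Qed.

Lemma n1_0 : n1 (0 : 'cV[R]_n) = 0.
Proof. by rewrite /n1 big1 // => i _; rewrite mxE normr0. Qed.

Variables (G R' R2 : set E) (x0 : 'cV[R]_n) (R3 : {fset E}) (Y : {fset 'cV[R]_n}).
Hypothesis HG : is_subgroup G.
Hypothesis Haff : aff (Defs.orbit R2 x0) = aff (Defs.orbit G x0).
Hypothesis HR3G : forall g, g \in R3 -> G g.
Hypothesis HY : forall y, y \in Y -> exists k, G k /\ y = act k x0.

Definition Hyp (M : E -> 'M[R]_n * 'cV[R]_n) (Et : R) :=
  forall g g' r h, g \in R3 -> g' \in R3 -> R' r -> g' = emul g r -> R2 h ->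
    n1 (Mapp (M g) (act g' (act h x0)) - Mapp (M g') (act g' (act h x0))) <= Et.

Definition Pbound x C := forall M Et, 0 <= Et -> Hyp M Et ->
  forall y, y \in Y -> n1 (Mapp (M x) y - Mapp (M (eid R n)) y) <= C * Et.

Definition Bound x := exists2 C, 0 <= C & Pbound x C.

Lemma span_unif g0 : G g0 ->
  exists2 K, 0 <= K & forall y, y \in Y -> forall (L : 'M[R]_n) (c : 'cV[R]_n) (Et : R), 0 <= Et ->
    (forall h, R2 h -> n1 (L *m act g0 (act h x0) + c) <= Et) ->
    n1 (L *m y + c) <= K * Et.
Proof.
move=> Gg0; apply: (fin_unif (s := Y)).
  move=> y C C' C0 CC' P L c Et Et0 h; apply: (le_trans (P L c Et Et0 h)).
  exact: ler_wpM2r.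
by move=> y yY; apply: (span_pt HG Haff Gg0); apply: HY.
Qed.

Lemma step x x' : x \in R3 -> x' \in R3 -> link R' x x' -> Bound x -> Bound x'.
Proof.
move=> xR x'R [r Rr [e|e]] [C C0 PC].
- have [K K0 HK] := span_unif (HR3G x'R).
  exists (K + C); first exact: addr_ge0.
  move=> M Et Et0 HM y yY.
  apply: (le_trans (n1_tri _ (Mapp (M x) y) _)); rewrite mulrDl lerD //; last exact: PC.
  rewrite Mapp_sub; apply: HK => // h Rh; rewrite -Mapp_sub -n1N opprB.
  exact: (HM x x' r h).
- have [K K0 HK] := span_unif (HR3G xR).
  exists (K + C); first exact: addr_ge0.
  move=> M Et Et0 HM y yY.
  apply: (le_trans (n1_tri _ (Mapp (M x) y) _)); rewrite mulrDl lerD //; last exact: PC.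
  rewrite Mapp_sub; apply: HK => // h Rh; rewrite -Mapp_sub.
  exact: (HM x' x r h).
Qed.

Lemma chain_bound s x : x \in R3 -> Bound x -> lchain G R' x s -> {subset s <= R3} ->
  forall y, y \in s -> Bound y.
Proof.
elim: s x => [|z s IH] x /=; first by move=> _ _ _ _ y; rewrite in_nil.
move=> xR Bx [l Gz c] sub y.
have zR : z \in R3 by apply: sub; rewrite mem_head.
have Bz := step xR zR l Bx.
rewrite in_cons => /orP [/eqP -> //|ys].
by apply: (IH z) => // w ws; apply: sub; rewrite in_cons ws orbT.
Qed.

Lemma bound_eid : Bound (eid R n).
Proof. by exists 0 => // M Et _ _ y _; rewrite subrr n1_0 mul0r. Qed.

Lemma all_bound : eid R n \in R3 ->
  (forall g, g \in R3 -> exists s, [/\ lchain G R' (eid R n) s, g \in (eid R n) :: s & {subset s <= R3}]) ->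
  exists2 C, 0 <= C & forall g, g \in R3 -> Pbound g C.
Proof.
move=> eR Hc; apply: (fin_unif (s := R3)).
  move=> g C C' C0 CC' P M Et Et0 HM y yY; apply: (le_trans (P M Et Et0 HM y yY)).
  exact: ler_wpM2r.
move=> g gR; have [s [c gs sub]] := Hc g gR.
move: gs; rewrite in_cons => /orP [/eqP ->|gs]; first exact: bound_eid.
exact: (chain_bound eR bound_eid c sub).
Qed.

End Bound.
Section PR.
Variable R : realType.
Variable n : nat.
Local Notation E := (Eel R n).
Variable x0 : 'cV[R]_n.

Lemma sqrt_sum_sq_le (I : Type) (r : seq I) (F : I -> R) :
  (forall i, 0 <= F i) -> Num.sqrt (\sum_(i <- r) F i ^+ 2) <= \sum_(i <- r) F i.
Proof.
move=> F0; apply: (le_trans (ler_wsqrtr (sum_sq_le r F0))).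
by rewrite sqrtr_sqr ger0_norm //; apply: sumr_ge0.
Qed.

Lemma fnorm_le_sum (Rs : {fset E}) (w : E -> 'cV[R]_n) :
  fnorm Rs w <= \sum_(h <- Rs) enorm (w h).
Proof.
rewrite /fnorm; under eq_bigr do rewrite -sq_enorm.
by apply: sqrt_sum_sq_le => i; apply: enorm_ge0.
Qed.

Lemma fnorm_ge0 (Rs : {fset E}) (w : E -> 'cV[R]_n) : 0 <= fnorm Rs w.
Proof. exact: sqrtr_ge0. Qed.

Lemma enorm_le_fnorm (Rs : {fset E}) (w : E -> 'cV[R]_n) h :
  h \in Rs -> enorm (w h) <= fnorm Rs w.
Proof.
move=> hR; rewrite /fnorm /enorm; apply: ler_wsqrtr.
rewrite (bigD1_seq h) //= ?fset_uniq // -{1}[\sum_(i < n) _]addr0 lerD2l.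
by apply: sumr_ge0 => k _; apply: sumr_ge0 => i _; apply: sqr_ge0.
Qed.

Lemma sum_le_sub (T : eqType) (s t : seq T) (F : T -> R) :
  uniq s -> uniq t -> {subset s <= t} -> (forall x, 0 <= F x) ->
  \sum_(x <- s) F x <= \sum_(x <- t) F x.
Proof.
move=> us ut st F0; rewrite [X in _ <= X](bigID (fun x => x \in s)) /=.
rewrite -[X in _ <= X + _]big_filter [X in _ <= X + _](perm_big s); last first.
  apply: uniq_perm; first exact: filter_uniq.
    exact: us.
  by move=> x; rewrite mem_filter; apply/andP/idP => [[]//|xs]; split => //; apply: st.
by rewrite lerDl; apply: sumr_ge0.
Qed.

Lemma Uiso0 (Rs : {fset E}) : Uiso x0 Rs (fun _ => 0).
Proof.
exists 0, 0; split; first by rewrite /Defs.skew trmx0 oppr0.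
by move=> g _; rewrite mulmx0 mul0mx addr0.
Qed.

Lemma has_inf_pR (Rs : {fset E}) v :
  has_inf [set fnorm Rs (v \- u) | u in Uiso x0 Rs].
Proof.
split; first by exists (fnorm Rs (v \- (fun _ => 0))); exists (fun _ => 0) => //; apply: Uiso0.
by exists 0 => _ [u _ <-]; apply: fnorm_ge0.
Qed.

Lemma pR_le (Rs : {fset E}) v u : Uiso x0 Rs u -> pR x0 Rs v <= fnorm Rs (v \- u).
Proof.
move=> hu; have [_ hl] := has_inf_pR Rs v.
by apply: (ge_inf hl); exists u.
Qed.

Lemma pR_glb (Rs : {fset E}) v a :
  (forall u, Uiso x0 Rs u -> a <= fnorm Rs (v \- u)) -> a <= pR x0 Rs v.
Proof.
move=> H; have [ne _] := has_inf_pR Rs v.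
by apply: lb_le_inf => // _ [u hu <-]; apply: H.
Qed.

Lemma pR_ge0 (Rs : {fset E}) v : 0 <= pR x0 Rs v.
Proof. by apply: pR_glb => u _; apply: fnorm_ge0. Qed.

Lemma pR_approx (Rs : {fset E}) v eps : 0 < eps ->
  exists u, Uiso x0 Rs u /\ fnorm Rs (v \- u) <= pR x0 Rs v + eps.
Proof.
move=> e0; have [_ [u hu <-] lt] := inf_adherent e0 (has_inf_pR Rs v).
by exists u; split => //; apply: ltW.
Qed.

End PR.
Lemma rearr (V : zmodType) (X Y Z W : V) : X + Y + (Z - Y - W) = Z + (X - W).
Proof. by rewrite addrA [X + Y + _]addrACA subrr addr0 (addrC X) addrA. Qed.

Section Shift.
Variable R : realType.
Variable n : nat.
Local Notation E := (Eel R n).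
Variable x0 : 'cV[R]_n.

Lemma Uiso_shift (g : E) (T Rs : {fset E}) u : isE g -> Uiso x0 T u ->
  (forall h, h \in Rs -> emul g h \in T) -> Uiso x0 Rs (fun h => u (emul g h)).
Proof.
case: g => A b; rewrite /isE /Defs.orthogonal /= => hA [a [S [sk H]]] sub.
exists (A^T *m a + A^T *m S *m (act (A, b) x0 - x0)), (A^T *m S *m A); split.
  by rewrite /Defs.skew !trmx_mul trmxK sk mulNmx mulmxN mulmxA.
move=> h hR; have := H _ (sub h hR).
rewrite act_emul /Defs.rot /emul /= => e.
have -> : h.1 *m u (A *m h.1, b + A *m h.2) = A^T *m ((A *m h.1) *m u (A *m h.1, b + A *m h.2)).
  by rewrite !mulmxA hA mul1mx.
rewrite e; set w := act h x0.
have -> : act (A, b) w - x0 = (act (A, b) x0 - x0) + A *m (w - x0).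
  rewrite /act /= mulmxBr; set p := A *m w; set s := A *m x0.
  by rewrite [RHS]addrC !addrA subrK.
by rewrite !mulmxDr addrA !mulmxA.
Qed.

Lemma pR_shift (g : E) (T Rs : {fset E}) v : isE g ->
  (forall h, h \in Rs -> emul g h \in T) ->
  pR x0 Rs (fun h => v (emul g h)) <= pR x0 T v.
Proof.
move=> gE sub; apply: pR_glb => u hu.
apply: (le_trans (pR_le _ (Uiso_shift gE hu sub))).
rewrite /fnorm; apply: ler_wsqrtr.
rewrite -(big_map (emul g) predT (fun k => \sum_i (v \- u) k i 0 ^+ 2)).
apply: sum_le_sub.
- rewrite map_inj_uniq ?fset_uniq //; move=> h h'; exact: emul_inj.
- exact: fset_uniq.
- by move=> k /mapP [h hR ->]; apply: sub.
- by move=> k; apply: sumr_ge0 => i _; apply: sqr_ge0.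
Qed.

Definition Mg (g : E) (a : 'cV[R]_n) (S : 'M[R]_n) : 'M[R]_n * 'cV[R]_n :=
  (g.1 *m S *m g.1^T, g.1 *m a - g.1 *m S *m g.1^T *m g.2 - g.1 *m S *m x0).

Lemma keyM (g h : E) a S : isE g ->
  Mapp (Mg g a S) (act (emul g h) x0) = g.1 *m (a + S *m (act h x0 - x0)).
Proof.
case: g => A b; rewrite /isE /Defs.orthogonal /= => hA.
rewrite act_emul; set w := act h x0; clearbody w; rewrite /Mapp /Mg /act /=.
rewrite mulmxDr.
have -> : A *m S *m A^T *m (A *m w) = A *m S *m w.
  by rewrite mulmxA -(mulmxA _ A^T) hA mulmx1.
by rewrite rearr [RHS]mulmxDr !mulmxBr !mulmxA.
Qed.

End Shift.
Lemma sum_le_const (R : realType) (T : eqType) (s : seq T) (F : T -> R) B :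
  (forall x, x \in s -> F x <= B) -> \sum_(x <- s) F x <= (size s)%:R * B.
Proof.
move=> H; rewrite mulr_natl; elim: s H => [|a s IH] H; first by rewrite big_nil mulr0n.
rewrite big_cons /= mulrS; apply: lerD; first by apply: H; rewrite mem_head.
by apply: IH => x xs; apply: H; rewrite in_cons xs orbT.
Qed.

Lemma le_sum_mem (R : realType) (T : eqType) (s : seq T) (F H : T -> R) :
  (forall x, x \in s -> F x <= H x) -> \sum_(x <- s) F x <= \sum_(x <- s) H x.
Proof. by move=> h; rewrite big_seq [X in _ <= X]big_seq; apply: ler_sum. Qed.

Lemma term_le_sum (R : realType) (T : eqType) (s : seq T) (F : T -> R) x :
  uniq s -> x \in s -> (forall y, 0 <= F y) -> F x <= \sum_(y <- s) F y.
Proof.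
move=> us xs F0; rewrite (bigD1_seq x) //= -{1}[F x]addr0 lerD2l.
by apply: sumr_ge0.
Qed.

Section Main.
Variable R : realType.
Variable n : nat.
Local Notation E := (Eel R n).
Variables (G : set E) (x0 : 'cV[R]_n).
Hypothesis HG : is_subgroup G.
Variables (R' R'' : set E) (R2 R3 : {fset E}).
Hypothesis HR2G : forall h, h \in R2 -> G h.
Hypothesis HR''2 : forall h, R'' h -> h \in R2.
Hypothesis HR'R'' : forall r h, R' r -> R'' h -> emul r h \in R2.
Hypothesis Haff : aff (Defs.orbit R'' x0) = aff (Defs.orbit G x0).
Hypothesis HR3G : forall g, g \in R3 -> G g.
Hypothesis He3 : eid R n \in R3.
Hypothesis Hch : forall g, g \in R3 -> exists s,
  [/\ lchain G R' (eid R n) s, g \in (eid R n) :: s & {subset s <= R3}].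

Local Notation T := (Rprod R3 R2).

Lemma T_mem k : k \in T -> exists g h, [/\ g \in R3, h \in R2 & k = emul g h].
Proof. by move=> /imfset2P [g gR [h hR ->]]; exists g, h. Qed.

Lemma in_T g h : g \in R3 -> h \in R2 -> emul g h \in T.
Proof. by move=> gR hR; apply/imfset2P; exists g => //; exists h. Qed.

Lemma GE g : G g -> isE g.
Proof. by case: HG => GE _ _ _; apply: GE. Qed.

Lemma GM g h : G g -> G h -> G (emul g h).
Proof. by case: HG => _ _ GM _; apply: GM. Qed.

Lemma T_G k : k \in T -> G k.
Proof. by move=> /T_mem [g [h [gR hR ->]]]; apply: GM; [apply: HR3G | apply: HR2G]. Qed.

Lemma upper v : qR x0 R3 R2 v <= (size R3)%:R * pR x0 T v.
Proof.
rewrite /qR; apply: (le_trans (@sqrt_sum_sq_le R _ R3 (fun g => pR x0 R2 (fun h => v (emul g h))) _)); first by move=> g; apply: pR_ge0.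
apply: sum_le_const => g gR; apply: pR_shift; first by apply: GE; apply: HR3G.
by move=> h hR; apply: in_T.
Qed.

Lemma lower : exists2 K, 0 <= K & forall v, pR x0 T v <= K * qR x0 R3 R2 v.
Proof.
set Y := [fset act k x0 | k in T]%fset.
have HY : forall y, y \in Y -> exists k, G k /\ y = act k x0.
  by move=> y /imfsetP [k kT ->]; exists k; split => //; apply: T_G.
have [C C0 HC] := all_bound (G := G) (R' := R') (Y := Y) HG Haff HR3G HY He3 Hch.
set N : R := n%:R.
have N0 : 0 <= N by apply: ler0n.
set K0 := (size T)%:R * (N * (1 + 2 * C)).
have K00 : 0 <= K0 by apply: mulr_ge0 => //; apply: mulr_ge0 => //; apply: addr_ge0 => //; apply: mulr_ge0.
exists (K0 * (size R3)%:R); first by apply: mulr_ge0.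
move=> v.
set pg := fun g => pR x0 R2 (fun h => v (emul g h)).
have claim : forall eps, 0 < eps -> pR x0 T v <= K0 * \sum_(g <- R3) (pg g + eps).
  move=> eps eps0.
  have ch : forall g : E, exists t : (E -> 'cV[R]_n) * 'cV[R]_n * 'M[R]_n,
      [/\ Defs.skew t.2, (forall h, h \in R2 -> Defs.rot h *m t.1.1 h = t.1.2 + t.2 *m (act h x0 - x0))
        & fnorm R2 ((fun h => v (emul g h)) \- t.1.1) <= pg g + eps].
    move=> g; have [u [[a [S [sk Hu]]] hf]] := pR_approx x0 R2 (fun h => v (emul g h)) eps0.
    by exists (u, a, S); split.
  have [f Hf] := choice ch.
  set u := fun g => (f g).1.1.
  set M := fun g => Mg x0 g (f g).1.2 (f g).2.
  set e := fun g => fnorm R2 ((fun h => v (emul g h)) \- u g).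
  have e0 : forall g, 0 <= e g by move=> g; apply: fnorm_ge0.
  set Etot := \sum_(g <- R3) e g.
  have Et0 : 0 <= Etot by apply: sumr_ge0.
  have eT : forall g, g \in R3 -> e g <= Etot.
    by move=> g gR; apply: term_le_sum => //; apply: fset_uniq.
  have Xb : forall g h, g \in R3 -> h \in R2 ->
      enorm (Defs.rot (emul g h) *m v (emul g h) - Mapp (M g) (act (emul g h) x0)) <= e g.
    move=> g h gR hR; have gE := GE (HR3G gR); have hE := GE (HR2G hR).
    have [_ Hr _] := Hf g.
    rewrite /M keyM // -(Hr h hR) /Defs.rot /emul /= -mulmxA -mulmxBr -mulmxBr mulmxA.
    rewrite enorm_orth; last exact: orth_mul.
    exact: (@enorm_le_fnorm R n R2 ((fun h0 => v (emul g h0)) \- u g) h hR).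
  have HM : Hyp R' R'' x0 R3 M (N * Etot + N * Etot).
    move=> g g' r h gR g'R Rr eg Rh.
    have hR := HR''2 Rh.
    set k := emul g' h.
    have k1 : act g' (act h x0) = act k x0 by rewrite act_emul.
    have k2 : k = emul g (emul r h) by rewrite /k eg emulA.
    rewrite k1.
    set P := Defs.rot k *m v k.
    have -> : Mapp (M g) (act k x0) - Mapp (M g') (act k x0) =
        (P - Mapp (M g') (act k x0)) - (P - Mapp (M g) (act k x0)).
      by rewrite [in RHS]opprB [in RHS]addrC [in RHS]addrA subrK.
    apply: (le_trans (n1B _ _)); apply: lerD.
      apply: (le_trans (n1_le_enorm _)); apply: ler_wpM2l => //.
      by apply: (le_trans (Xb g' h g'R hR)); apply: eT.
    apply: (le_trans (n1_le_enorm _)); apply: ler_wpM2l => //.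
    rewrite /P k2; apply: (le_trans (Xb g (emul r h) gR (HR'R'' Rr Rh))); exact: eT.
  set U := fun k => (Defs.rot k)^T *m Mapp (M (eid R n)) (act k x0).
  have UT : Uiso x0 T U.
    have [sk _ _] := Hf (eid R n).
    exists (f (eid R n)).1.2, (f (eid R n)).2; split => // k kT.
    have kE := GE (T_G kT).
    rewrite /U mulmxA orthC // mul1mx.
    have eE : isE (eid R n) by rewrite /isE /Defs.orthogonal /eid /= trmx1 mul1mx.
    by rewrite /M -{1}(emul1g k) keyM // /eid /= mul1mx.
  apply: (le_trans (pR_le _ UT)); apply: (le_trans (fnorm_le_sum _ _)).
  apply: (@le_trans _ _ ((size T)%:R * (N * (1 + 2 * C) * Etot))).
    apply: sum_le_const => k kT /=.
    have kE := GE (T_G kT).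
    have [g [h [gR hR ek]]] := T_mem kT.
    rewrite -(enorm_orth _ kE) mulmxBr /U mulmxA orthC // mul1mx.
    apply: (le_trans (enorm_le_n1 _)).
    apply: (le_trans (n1_tri _ (Mapp (M g) (act k x0)) _)).
    have -> : N * (1 + 2 * C) * Etot = N * Etot + C * (N * Etot + N * Etot).
      by rewrite mulrDr mulr1 mulrDl -mulr2n -mulr_natl; ring.
    apply: lerD.
      apply: (le_trans (n1_le_enorm _)); apply: ler_wpM2l => //.
      by rewrite ek; apply: (le_trans (Xb g h gR hR)); apply: eT.
    apply: (HC g gR M _ _ HM); first by apply: addr_ge0; apply: mulr_ge0.
    by apply/imfsetP; exists k.
  rewrite /K0 -[X in _ <= X]mulrA; apply: ler_wpM2l => //; apply: ler_wpM2l; first by apply: mulr_ge0 => //; apply: addr_ge0 => //; apply: mulr_ge0.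
  apply: le_sum_mem => g gR; have [_ _ hf] := Hf g; exact: hf.
have qb : forall g, g \in R3 -> pg g <= qR x0 R3 R2 v.
  move=> g gR; rewrite /qR -[pg g]ger0_norm ?pR_ge0 // -sqrtr_sqr; apply: ler_wsqrtr.
  by apply: (@term_le_sum R _ R3 (fun g => pg g ^+ 2) g (fset_uniq R3) gR) => y; apply: sqr_ge0.
set K := K0 * (size R3)%:R.
have K0' : 0 <= K by apply: mulr_ge0.
apply/ler_addgt0Pr => e e0.
have eps0 : 0 < e / (K + 1) by apply: divr_gt0 => //; apply: ltr_wpDl.
apply: (le_trans (claim _ eps0)).
apply: (le_trans (ler_wpM2l K00 (@sum_le_const R _ R3 (fun g => pg g + e / (K + 1)) (qR x0 R3 R2 v + e / (K + 1)) _))).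
  by move=> g gR; rewrite lerD2r; apply: qb.
rewrite mulrA mulrDr lerD2l -/K.
rewrite mulrA ler_pdivrMr; last by apply: ltr_wpDl.
by rewrite mulrC; apply: ler_wpM2l; [exact: ltW | rewrite lerDl].
Qed.

End Main.
Lemma lchain_G (R : realType) (n : nat) (G R' : set (Eel R n)) x s y :
  lchain G R' x s -> y \in s -> G y.
Proof.
elim: s x => [|z s IH] x //= [_ Gz c]; rewrite in_cons => /orP [/eqP -> //|ys].
exact: IH c ys.
Qed.

Theorem main_gen (R : realType) (n : nat) (G : set (Eel R n)) (x0 : 'cV[R]_n)
    (HG : is_subgroup G) (R1 R2 : {fset Eel R n})
    (HR1 : [set` R1] `<=` G) (HR2 : property2 G x0 R2) :
  exists R3 : {fset Eel R n},
    [/\ [set` R3] `<=` G,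
        fsubset R1 (Rprod R3 R2) &
        seminorms_equiv (pR x0 (Rprod R3 R2)) (qR x0 R3 R2)].
Proof.
case: HR2 => HR2G [R' [R'' [HR'G HR'e Hgen [HR''G _ HR''e Haff] Hsub]]].
have sub2 : forall r h, R' r -> R'' h -> emul r h \in R2.
  by move=> r h Rr Rh; apply: Hsub; exists r => //; exists h.
have HR2G' : forall h, h \in R2 -> G h by move=> h hR; apply: HR2G.
have HR''2 : forall h, R'' h -> h \in R2.
  by move=> h Rh; rewrite -(emul1g h); apply: sub2.
have e2 : eid R n \in R2 by apply: HR''2.
have ch : forall g, exists s : seq (Eel R n), G g -> lchain G R' (eid R n) s /\ last (eid R n) s = g.
  move=> g; case: (pselect (G g)) => Gg; last by exists [::].
  by have [s hs] := reach_all HG HR'G Hgen Gg; exists s.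
have [f Hf] := choice ch.
set R3 := [fset x | x in eid R n :: flatten [seq f g | g <- R1]]%fset.
have mem3 : forall x, x \in R3 -> x = eid R n \/ exists2 g, g \in R1 & x \in f g.
  move=> x; rewrite in_fset /= in_cons => /orP [/eqP ->|]; first by left.
  by move=> /flatten_mapP [g gR xf]; right; exists g.
have in3 : forall g x, g \in R1 -> x \in f g -> x \in R3.
  move=> g x gR xf; rewrite in_fset /= in_cons; apply/orP; right.
  by apply/flatten_mapP; exists g.
have He3 : eid R n \in R3 by rewrite in_fset /= mem_head.
have HR3G : forall x, x \in R3 -> G x.
  move=> x /mem3 [->|[g gR xf]]; first by case: HG.
  have [c _] := Hf g (HR1 _ gR); exact: lchain_G c xf.
have Hch : forall x, x \in R3 -> exists s,
    [/\ lchain G R' (eid R n) s, x \in (eid R n) :: s & {subset s <= R3}].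
  move=> x /mem3 [->|[g gR xf]]; first by exists [::]; split => //; rewrite mem_head.
  have [c _] := Hf g (HR1 _ gR); exists (f g); split => //.
    by rewrite in_cons xf orbT.
  by move=> y yf; apply: (in3 g).
have R13 : forall g, g \in R1 -> g \in R3.
  move=> g gR; have [_ l] := Hf g (HR1 _ gR).
  have := mem_last (eid R n) (f g); rewrite l in_cons => /orP [/eqP ->|]; first exact: He3.
  exact: in3.
exists R3; split.
- by move=> x; apply: HR3G.
- by apply/fsubsetP => g gR; rewrite -(emulg1 g); apply: in_T => //; apply: R13.
have [K K0 HK] := lower HG HR2G' HR''2 sub2 Haff HR3G He3 Hch.
have K1 : 0 < K + 1 by apply: ltr_wpDl.
exists (1 / (K + 1)), ((size R3)%:R + 1); split.
- by apply: divr_gt0.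
- by apply: ltr_wpDl.
move=> v; have q0 : 0 <= qR x0 R3 R2 v by apply: sqrtr_ge0.
have p0 : 0 <= pR x0 (Rprod R3 R2) v by apply: pR_ge0.
split.
  rewrite mulrC mul1r ler_pdivrMr // mulrDr mulr1 (mulrC (qR x0 R3 R2 v)).
  by apply: (le_trans (HK v)); rewrite lerDl.
apply: (le_trans (upper x0 HG R2 HR3G v)).
by rewrite mulrDl mul1r lerDl.
Qed.

Unset Implicit Arguments.

Theorem lemma3p11 (R : realType) (d1 d2 : nat) (S : set (Eel R d2))
    (G : set (Eel R (d1 + d2))) (x0 : 'cV[R]_(d1 + d2)) (daff : nat)
    (Hst : standing S G x0 daff)
    (R1 R2 : {fset Eel R (d1 + d2)})
    (HR1 : [set` R1] `<=` G)
    (HR2 : property2 G x0 R2) :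
  exists R3 : {fset Eel R (d1 + d2)},
    [/\ [set` R3] `<=` G,
        fsubset R1 (Rprod R3 R2) &
        seminorms_equiv (pR x0 (Rprod R3 R2)) (qR x0 R3 R2)].
Proof.
case: Hst => [[_ [HG _]] _ _ _ _].
exact: (@main_gen R (d1 + d2) G x0 HG R1 R2 HR1 HR2).
Qed.
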